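(* Let $1\le N_a<N_b$, $\mathcal N=N_a+N_b$, real $\kappa_1<\dots<\kappa_{\mathcal N}$ with indices taken modulo $\mathcal N$. For $q=(q_1,q_2)\in\mathbb R^2$ define $q_{mn}=q_2-(\kappa_m+\kappa_n)q_1+\kappa_m\kappa_n$ and $\widetilde q_{mn}=(\kappa_m-\kappa_n)q_{mn}$, and let $\theta$ be the Heaviside step function. Then for every $m$ the characteristic function $\epsilon_m(q)=\prod_{k=m}^{m+N_b}\theta(\widetilde q_{k+N_a,k})$ coincides with $$\widetilde\epsilon_m(q)=\prod_{k=m}^{m+N_b}\theta(\widetilde q_{k+N_a,k})\prod_{l=m}^{m+N_b-1}\theta(\widetilde q_{l+N_a,l+1}).$$
   Context: Indices of $\kappa$ are read modulo $\mathcal N$, i.e. $\kappa_{l+\mathcal N}=\kappa_l$. *)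

(* Defs.v *)
From mathcomp Require Import all_boot all_order all_algebra.
From mathcomp Require Import reals.
Set Implicit Arguments. Unset Strict Implicit. Unset Printing Implicit Defensive.
Import Order.TTheory GRing.Theory Num.Theory.
Local Open Scope ring_scope.

Definition heaviside {R : realType} (x : R) : R := if 0 <= x then 1 else 0.

Section Defs.
Variables (R : realType) (kappa : nat -> R).

Definition qmn (q : R * R) (m n : nat) : R :=
  q.2 - (kappa m + kappa n) * q.1 + kappa m * kappa n.

Definition qtil (q : R * R) (m n : nat) : R := (kappa m - kappa n) * qmn q m n.

Definition eps (Na Nb : nat) (m : nat) (q : R * R) : R :=
  \prod_(m <= k < m + Nb + 1) heaviside (qtil q (k + Na) k).

Definition epst (Na Nb : nat) (m : nat) (q : R * R) : R :=
  (\prod_(m <= k < m + Nb + 1) heaviside (qtil q (k + Na) k)) *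
  (\prod_(m <= l < m + Nb) heaviside (qtil q (l + Na) l.+1)).
End Defs.

(* Main.v *)
Require Import Defs.
From mathcomp Require Import all_boot all_order all_algebra.
From mathcomp Require Import reals.
From mathcomp Require Import ring lra zify.
Import Order.TTheory GRing.Theory Num.Theory.
Local Open Scope ring_scope.

Lemma fin (R : realType) (K T A B G0 P Q : R): 0<K -> 0<=A -> 0<=B -> 0<=G0 -> 0<=P -> 0<=Q -> K*T = A*P+B*Q+G0 -> 0<=T.
Proof.
move=> hK hA hB hG hP hQ E.
have: 0 <= K * T by rewrite E; rewrite !addr_ge0 // mulr_ge0.
by rewrite pmulr_rge0.
Qed.

Lemma pp (R : realType) (x y : R) : 0 < x -> 0 < y -> 0 < x * y.
Proof. exact: mulr_gt0. Qed.
Lemma nn (R : realType) (x y : R) : x < 0 -> y < 0 -> 0 < x * y.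
Proof. move=> *; rewrite -mulrNN; apply: mulr_gt0; rewrite oppr_gt0 //. Qed.
Lemma pn (R : realType) (x y : R) : 0 < x -> y < 0 -> x * y < 0.
Proof. move=> *; rewrite -oppr_gt0 -mulrN; apply: mulr_gt0; rewrite ?oppr_gt0 //. Qed.
Lemma np (R : realType) (x y : R) : x < 0 -> 0 < y -> x * y < 0.
Proof. move=> *; rewrite -oppr_gt0 -mulNr; apply: mulr_gt0; rewrite ?oppr_gt0 //. Qed.
Ltac pos := first [ lra | (apply: pp; pos) | (apply: nn; neg) ]
with neg := first [ lra | (apply: pn; [pos|neg]) | (apply: np; [neg|pos]) ].

Lemma core (R : realType) (a b c d x y : R) :
  (a<b /\ b<c /\ c<d) \/ (b<c /\ c<d /\ d<a) \/ (c<d /\ d<a /\ a<b) \/ (d<a /\ a<b /\ b<c) ->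
  0 <= (c-a)*(y-(c+a)*x+c*a) -> 0 <= (d-b)*(y-(d+b)*x+d*b) ->
  0 <= (c-b)*(y-(c+b)*x+c*b).
Proof.
move=> H hP hQ.
apply: (@fin R (((b-a)+(d-c))*(c-a)*(d-b)) _ ((c-b)*(d-c)*(d-b))
   ((c-b)*(b-a)*(c-a)) ((c-b)*(c-b)*(b-a)*(d-c)*(c-a)*(d-b)) _ _ _ _ _ _ hP hQ); last by ring.
all: case: H => [[h1 [h2 h3]]|[[h1 [h2 h3]]|[[h1 [h2 h3]]|[h1 [h2 h3]]]]]; try apply: ltW; pos.
Qed.

Theorem lemma5p3 (R : realType) (Na Nb : nat) (kappa : nat -> R)
  (hNa : (1 <= Na)%N) (hNab : (Na < Nb)%N)
  (hper : forall l : nat, kappa (l + (Na + Nb))%N = kappa l)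
  (hinc : forall i j : nat, (1 <= i)%N -> (i < j)%N -> (j <= Na + Nb)%N ->
            kappa i < kappa j) :
  forall (m : nat) (q : R * R), eps kappa Na Nb m q = epst kappa Na Nb m q.
Proof.
set N := (Na + Nb)%N in hper hinc *.
have kmod : forall j, kappa j = kappa (j %% N)%N.
  move=> j; rewrite {1}(div.divn_eq j N); elim: (j %/ N)%N => [|t IH]; first by rewrite mul0n add0n.
  by rewrite (_ : (t.+1 * N + j %% N = (t * N + j %% N) + N)%N) ?hper //; lia.
have cycK : forall l, (2 <= Na)%N ->
  let a := kappa l in let b := kappa l.+1 in let c := kappa (l + Na)%N in
  let d := kappa (l.+1 + Na)%N in
  (a<b /\ b<c /\ c<d) \/ (b<c /\ c<d /\ d<a) \/ (c<d /\ d<a /\ a<b) \/ (d<a /\ a<b /\ b<c).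
  move=> l hNa2 a b c d.
  have ks : forall s, kappa (l + s)%N = kappa (l %% N + s)%N.
    by move=> s; rewrite kmod (kmod (l %% N + s)%N) modnDml.
  have hr : (l %% N < N)%N by rewrite ltn_pmod //; lia.
  have ka : kappa l = kappa (l %% N)%N by rewrite kmod.
  have kb : kappa l.+1 = kappa (l %% N + 1)%N by rewrite -ks addn1.
  have kd : kappa (l.+1 + Na)%N = kappa (l %% N + (1 + Na))%N by rewrite -ks addnA addn1.
  rewrite /a /b /c /d ka kb kd (ks Na).
  move: (l %% N)%N hr => r hr.
  have h0 : kappa 0 = kappa N by rewrite -(hper 0) add0n.
  case: (ltngtP r 0) => // [r0|].
  - case: (leqP (r + (1 + Na)) N) => h1.
    + left; split; [|split]; apply: hinc; lia.
    + case: (ltngtP (r + Na) N) => h2; first lia.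
      * right; right; left.
        rewrite (_ : kappa (r + Na)%N = kappa (r + Na - N)%N); last first.
          by rewrite -{1}(hper (r + Na - N)%N); congr kappa; lia.
        rewrite (_ : kappa (r + (1 + Na))%N = kappa (r + (1+Na) - N)%N); last first.
          by rewrite -{1}(hper (r + (1+Na) - N)%N); congr kappa; lia.
        split; [|split]; apply: hinc; lia.
      * right; right; right.
        rewrite (_ : kappa (r + (1 + Na))%N = kappa 1); last first.
          by rewrite -(hper 1); congr kappa; lia.
        rewrite h2; split; [|split]; apply: hinc; lia.
  - move=> r0; subst r; rewrite add0n h0; right; left.
    split; [|split]; apply: hinc; lia.
move=> m q; rewrite /eps /epst.
set F := fun k => qtil kappa q (k + Na) k.
case: (boolP (has (fun k => F k < 0) (index_iota m (m + Nb + 1)))) => Hh.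
  have z : \prod_(m <= k < m + Nb + 1) heaviside (F k) = 0.
    apply/eqP; rewrite prodf_seq_eq0; apply: sub_has Hh => k /= Hk.
    by rewrite /heaviside leNgt Hk.
  by rewrite /F in z; rewrite z mul0r.
have Hn : forall k, k \in index_iota m (m + Nb + 1) -> 0 <= F k.
  by move/hasPn: Hh => Hh k /Hh; rewrite leNgt.
rewrite big1_seq => [|k /andP[_ Hk]]; last by rewrite /heaviside (Hn k Hk).
rewrite mul1r big1_seq // => l; rewrite andTb => Hl; rewrite /heaviside ifT //.
rewrite mem_index_iota in Hl.
case: (ltngtP Na 1) => hN; first lia; last first.
  by rewrite hN addn1 /qtil subrr mul0r.
have H1 := Hn l; have H2 := Hn l.+1.
rewrite /F /qtil /qmn in H1 H2 *.
apply: core (cycK l hN) _ _.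
  by apply: H1; rewrite mem_index_iota; lia.
by apply: H2; rewrite mem_index_iota; lia.
Qed.
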